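(* Let $\mathcal A\subseteq 2^\omega$ be a class of Turing degrees, i.e. $X\in\mathcal A$ and $Y\equiv_T X$ imply $Y\in\mathcal A$. Let $D_T(\mathcal A)=\{Y\in 2^\omega:\exists X\in\mathcal A\,(Y\le_T X)\}$ and $U_T(\mathcal A)=\{Y\in 2^\omega:\exists X\in\mathcal A\,(X\le_T Y)\}$. Then $\dim_H(\mathcal A)=\dim_H(D_T(\mathcal A))$ and $\dim_H(\mathcal A)\le \dim_H(U_T(\mathcal A))$. The same two statements hold when Turing reducibility $\le_T$ and Turing equivalence $\equiv_T$ are replaced everywhere by hyperarithmetic reducibility $\le_h$ and hyperarithmetic equivalence $\equiv_h$.
   Context: $\dim_H$ denotes the (classical) Hausdorff dimension of a subset of Cantor space $2^\omega$ with respect to the standard metric (equivalently, by Lutz's characterization, the infimum of rationals $s\in[0,1]$ such that some supermartingale $d$ satisfies $\limsup_n d(X\upharpoonright n)/2^{(1-s)n}=\infty$ for all $X$ in the class). *)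

(* Defs.v *)
From HB Require Import structures.
From mathcomp Require Import all_boot all_order all_algebra.
From mathcomp Require Import all_classical all_reals.
From mathcomp Require Import exp Rstruct.
Set Implicit Arguments. Unset Strict Implicit. Unset Printing Implicit Defensive.
Import Order.TTheory GRing.Theory Num.Theory.

(* Arguments are passed as a list of naturals; missing arguments read as 0.
   [OrA] queries oracle A, [OrB] queries oracle B, at the first argument. *)
Inductive prf : Type :=
| PZero | PSucc | PProj (i : nat) | POrA | POrB
| PComp (f : prf) (gs : list prf)
| PPrim (b s : prf)
| PMin (f : prf).

Inductive eval (A B : nat -> nat) : prf -> list nat -> nat -> Prop :=
| eZero v : eval A B PZero v 0
| eSucc v : eval A B PSucc v (head 0 v).+1
| eProj i v : eval A B (PProj i) v (nth 0 v i)
| eOrA v : eval A B POrA v (A (head 0 v))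
| eOrB v : eval A B POrB v (B (head 0 v))
| eComp f gs v ws y :
    evals A B gs v ws -> eval A B f ws y -> eval A B (PComp f gs) v y
| ePrim0 b s v y : eval A B b v y -> eval A B (PPrim b s) (0 :: v) y
| ePrimS b s n v z y :
    eval A B (PPrim b s) (n :: v) z -> eval A B s (n :: z :: v) y ->
    eval A B (PPrim b s) (n.+1 :: v) y
| eMin f v n :
    eval A B f (n :: v) 0 ->
    (forall m, m < n -> exists k, eval A B f (m :: v) k.+1) ->
    eval A B (PMin f) v n
with evals (A B : nat -> nat) : list prf -> list nat -> list nat -> Prop :=
| esNil v : evals A B [::] v [::]
| esCons g gs v y ys :
    eval A B g v y -> evals A B gs v ys -> evals A B (g :: gs) v (y :: ys).

Definition cantor := nat -> bool.
Definition b2n (X : cantor) : nat -> nat := fun n => nat_of_bool (X n).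

Definition turing_le (X Y : cantor) : Prop :=
  exists e : prf, forall n, eval (b2n Y) (fun _ => 0) e [:: n] (b2n X n).
Definition turing_eq (X Y : cantor) : Prop := turing_le X Y /\ turing_le Y X.

(** Pi^1_1(Y) subsets of nat, via the normal form
    n \in S  <->  forall f in omega^omega, Phi_e^{Y (+) f}(n) halts. *)
Definition Pi11 (Y : cantor) (S : nat -> Prop) : Prop :=
  exists e : prf, forall n,
    S n <-> forall f : nat -> nat, exists y, eval (b2n Y) f e [:: n] y.

(** Hyperarithmetic reducibility: X <=_h Y iff X is Delta^1_1(Y)
    (Kleene: equivalently, X is hyperarithmetic in Y). *)
Definition hyp_le (X Y : cantor) : Prop :=
  Pi11 Y (fun n => X n = true) /\ Pi11 Y (fun n => X n = false).
Definition hyp_eq (X Y : cantor) : Prop := hyp_le X Y /\ hyp_le Y X.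

Definition closed_under (eqv : cantor -> cantor -> Prop) (A : set cantor) :=
  forall X Y, A X -> eqv Y X -> A Y.
Definition down_closure (le : cantor -> cantor -> Prop) (A : set cantor) : set cantor :=
  fun Y => exists X, A X /\ le Y X.
Definition up_closure (le : cantor -> cantor -> Prop) (A : set cantor) : set cantor :=
  fun Y => exists X, A X /\ le X Y.

(** Hausdorff dimension on Cantor space (metric d(X,Y) = 2^-min{i | X i <> Y i}). *)
Local Open Scope ring_scope.

Definition cyl (s : seq bool) : set cantor :=
  fun X => forall i, (i < size s)%N -> X i = nth false s i.

(* weight of a covering set: diam^s = 2^(-s |sigma|); None = unused slot *)
Definition cweight (s : Rdefinitions.R) (o : option (seq bool)) : Rdefinitions.R :=
  match o with
  | Some sig => (2 : Rdefinitions.R) `^ (- (s * (size sig)%:R))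
  | None => 0
  end.

Definition Hnull (s : Rdefinitions.R) (A : set cantor) : Prop :=
  forall (n : nat) (eps : Rdefinitions.R), 0 < eps ->
    exists c : nat -> option (seq bool),
      (forall i sig, c i = Some sig -> (n <= size sig)%N) /\
      (forall X, A X -> exists i sig, c i = Some sig /\ cyl sig X) /\
      (forall N : nat, \sum_(i < N) cweight s (c i) <= eps).

Definition dimH (A : set cantor) : Rdefinitions.R :=
  inf [set s : Rdefinitions.R | 0 <= s /\ Hnull s A].

(* Main.v *)
Require Import Defs.
From Stdlib Require Import PeanoNat Lia.
From mathcomp Require Import all_boot all_order all_algebra.
From mathcomp Require Import all_classical all_reals.
From mathcomp Require Import exp Rstruct.
From mathcomp Require Import zify ring lra.
Import Order.TTheory GRing.Theory Num.Theory.

Section PrfInd.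
Variable P : prf -> Prop.
Hypotheses (HZ : P PZero) (HS : P PSucc) (HP : forall i, P (PProj i))
  (HA : P POrA) (HB : P POrB)
  (HC : forall f gs, P f -> List.Forall P gs -> P (PComp f gs))
  (HR : forall b s, P b -> P s -> P (PPrim b s))
  (HM : forall f, P f -> P (PMin f)).
Fixpoint prf_ind2 (e : prf) : P e :=
  match e with
  | PZero => HZ | PSucc => HS | PProj i => HP i | POrA => HA | POrB => HB
  | PComp f gs => HC f gs (prf_ind2 f)
      ((fix G (l : list prf) : List.Forall P l :=
          match l with nil => List.Forall_nil _
          | cons g l' => @List.Forall_cons _ P g l' (prf_ind2 g) (G l') end) gs)
  | PPrim b s => HR b s (prf_ind2 b) (prf_ind2 s)
  | PMin f => HM f (prf_ind2 f)
  end.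
End PrfInd.

Lemma evals_det_F A B gs : List.Forall (fun e => forall v y y', eval A B e v y -> eval A B e v y' -> y = y') gs ->
  forall v ws ws', evals A B gs v ws -> evals A B gs v ws' -> ws = ws'.
Proof.
elim=> [|g l Hg _ IH] v ws ws' E1 E2.
  by inversion E1; inversion E2.
inversion E1 as [|g1 l1 v1 y1 ys1 Ha Hb]; inversion E2 as [|g2 l2 v2 y2 ys2 Hc Hd]; subst.
by rewrite (Hg _ _ _ Ha Hc) (IH _ _ _ Hb Hd).
Qed.

Lemma eval_det A B e : forall v y y', eval A B e v y -> eval A B e v y' -> y = y'.
Proof.
elim/prf_ind2: e.
- by move=> v y y' H1 H2; inversion H1; inversion H2; subst.
- by move=> v y y' H1 H2; inversion H1; inversion H2; subst.
- by move=> i v y y' H1 H2; inversion H1; inversion H2; subst.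
- by move=> v y y' H1 H2; inversion H1; inversion H2; subst.
- by move=> v y y' H1 H2; inversion H1; inversion H2; subst.
- move=> f gs IHf IHgs v y y' H1 H2.
  inversion H1 as [| | | | |f1 gs1 v1 ws1 y1 Ha Hb| | |]; subst.
  inversion H2 as [| | | | |f2 gs2 v2 ws2 y2 Hc Hd| | |]; subst.
  have E := @evals_det_F A B gs IHgs _ _ _ Ha Hc; subst; exact: IHf _ _ _ Hb Hd.
- move=> b s IHb IHs v y y' H1 H2.
  case: v H1 H2 => [|n v] H1 H2; first by inversion H1.
  elim: n y y' H1 H2 => [|n IHn] y y' H1 H2.
  + inversion H1 as [| | | | | |b1 s1 v1 y1 Ha| |]; subst.
    inversion H2 as [| | | | | |b2 s2 v2 y2 Hc| |]; subst.
    exact: IHb _ _ _ Ha Hc.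
  + inversion H1 as [| | | | | | |b1 s1 n1 v1 z1 y1 Ha Hb|]; subst.
    inversion H2 as [| | | | | | |b2 s2 n2 v2 z2 y2 Hc Hd|]; subst.
    have E := IHn _ _ Ha Hc; subst; exact: IHs _ _ _ Hb Hd.
- move=> f IHf v y y' H1 H2.
  inversion H1 as [| | | | | | | |f1 v1 n1 Ha Hb]; subst.
  inversion H2 as [| | | | | | | |f2 v2 n2 Hc Hd]; subst.
  case: (ltngtP y y') => // Hc'.
  + case: (Hd _ Hc') => k Hk; by have := IHf _ _ _ Ha Hk.
  + case: (Hb _ Hc') => k Hk; by have := IHf _ _ _ Hc Hk.
Qed.

Section Progs.
Variables A B : nat -> nat.

Lemma eProj' i v y : y = nth 0 v i -> eval A B (PProj i) v y.
Proof. by move->; constructor. Qed.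

Lemma eComp1 f g v w y : eval A B g v w -> eval A B f [:: w] y ->
  eval A B (PComp f [:: g]) v y.
Proof. move=> H1 H2; econstructor; last exact: H2. by repeat constructor. Qed.

Lemma eComp2 f g1 g2 v w1 w2 y : eval A B g1 v w1 -> eval A B g2 v w2 ->
  eval A B f [:: w1; w2] y -> eval A B (PComp f [:: g1; g2]) v y.
Proof. move=> H1 H2 H3; econstructor; last exact: H3. by repeat constructor. Qed.

Lemma eComp1_inv f g v y : eval A B (PComp f [:: g]) v y ->
  exists w, eval A B g v w /\ eval A B f [:: w] y.
Proof.
move=> H; inversion H as [| | | | |f1 gs1 v1 ws1 y1 Ha Hb| | |]; subst.
inversion Ha as [|g2 l2 v2 y2 ys2 Hc Hd]; subst.
inversion Hd; subst. by exists y2.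
Qed.

Lemma eComp2_inv f g1 g2 v y : eval A B (PComp f [:: g1; g2]) v y ->
  exists w1 w2, [/\ eval A B g1 v w1, eval A B g2 v w2 & eval A B f [:: w1; w2] y].
Proof.
move=> H; inversion H as [| | | | |f1 gs1 v1 ws1 y1 Ha Hb| | |]; subst.
inversion Ha as [|g2' l2 v2 y2 ys2 Hc Hd]; subst.
inversion Hd as [|g3 l3 v3 y3 ys3 He Hf]; subst.
inversion Hf; subst. by exists y2, y3.
Qed.

Lemma e_sproj i v : eval A B (PComp PSucc [:: PProj i]) v (nth 0 v i).+1.
Proof. apply: eComp1; constructor. Qed.

Definition oneP := PComp PSucc [:: PZero].
Lemma e_one v : eval A B oneP v 1.
Proof. apply: eComp1; constructor. Qed.

Definition addP := PPrim (PProj 0) (PComp PSucc [:: PProj 1]).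
Lemma e_add a b : eval A B addP [:: a; b] (a + b).
Proof.
elim: a => [|a IH]; first by apply: ePrim0; apply: eProj'.
apply: ePrimS; first exact: IH.
rewrite addSn; exact: (e_sproj 1 [:: a; a + b; b]).
Qed.

Definition mulP := PPrim PZero (PComp addP [:: PProj 1; PProj 2]).
Lemma e_mul a b : eval A B mulP [:: a; b] (a * b).
Proof.
elim: a => [|a IH]; first by rewrite mul0n; apply: ePrim0; constructor.
apply: ePrimS; first exact: IH.
apply: eComp2; try by apply: eProj'. by rewrite mulSn addnC; apply: e_add.
Qed.

Definition predP := PPrim PZero (PProj 0).
Lemma e_pred a : eval A B predP [:: a] a.-1.
Proof.
elim: a => [|a IH]; first by apply: ePrim0; constructor.
apply: ePrimS; first exact: IH. by apply: eProj'.
Qed.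

Definition subR := PPrim (PProj 0) (PComp predP [:: PProj 1]).
Lemma e_subR a b : eval A B subR [:: b; a] (a - b).
Proof.
elim: b => [|b IH]; first by apply: ePrim0; apply: eProj'; rewrite subn0.
apply: ePrimS; first exact: IH.
apply: eComp1; first by apply: eProj'. by rewrite subnS; apply: e_pred.
Qed.

Definition subP := PComp subR [:: PProj 1; PProj 0].
Lemma e_sub a b : eval A B subP [:: a; b] (a - b).
Proof. apply: eComp2; try by apply: eProj'. exact: e_subR. Qed.

Definition sqF := PComp subP [:: PComp PSucc [:: PProj 1];
   PComp mulP [:: PComp PSucc [:: PProj 0]; PComp PSucc [:: PProj 0]]].
Lemma e_sqF m n : eval A B sqF [:: m; n] (n.+1 - m.+1 * m.+1).
Proof.
apply: eComp2; last exact: e_sub.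
  exact: (e_sproj 1 [:: m; n]).
apply: eComp2; last exact: e_mul; exact: (e_sproj 0 [:: m; n]).
Qed.

Definition sqrtP := PMin sqF.
Lemma e_sqrt n : eval A B sqrtP [:: n] (Nat.sqrt n).
Proof.
have [H1 H2] := Nat.sqrt_spec n (Nat.le_0_l n).
constructor.
  have -> : 0 = n.+1 - (Nat.sqrt n).+1 * (Nat.sqrt n).+1 by lia.
  exact: e_sqF.
move=> m Hm; exists (n - m.+1 * m.+1).
have -> : (n - m.+1 * m.+1).+1 = n.+1 - m.+1 * m.+1 by nia.
exact: e_sqF.
Qed.

Definition sqP := PComp mulP [:: PProj 0; PProj 0].
Lemma e_sq k : eval A B sqP [:: k] (k * k).
Proof. apply: eComp2; try by apply: eProj'. exact: e_mul. Qed.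

Definition issq (n : nat) : bool := Nat.sqrt n * Nat.sqrt n == n.

Definition csqP := PComp subP [:: oneP; PComp subP [:: PProj 0; PComp sqP [:: sqrtP]]].
Lemma e_csq n : eval A B csqP [:: n] (issq n).
Proof.
apply: (@eComp2 _ _ _ _ 1 (n - Nat.sqrt n * Nat.sqrt n)); first exact: e_one.
  apply: (@eComp2 _ _ _ _ n (Nat.sqrt n * Nat.sqrt n)); first by apply: eProj'.
    apply: eComp1; first exact: e_sqrt. exact: e_sq.
  exact: e_sub.
have [H1 H2] := Nat.sqrt_spec n (Nat.le_0_l n).
suff <- : 1 - (n - Nat.sqrt n * Nat.sqrt n) = issq n by exact: e_sub.
rewrite /issq; case: eqP => /= E; lia.
Qed.

Definition ncsqP := PComp subP [:: oneP; csqP].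
Lemma e_ncsq n : eval A B ncsqP [:: n] (~~ issq n).
Proof.
apply: (@eComp2 _ _ _ _ 1 (issq n)); [exact: e_one | exact: e_csq |].
by case: (issq n); apply: e_sub.
Qed.

End Progs.

Definition halts A B e n := exists y, eval A B e [:: n] y.

Definition haltz g := PMin (PComp g [:: PProj 1]).
Lemma haltz_spec A B g n w : eval A B g [:: n] w ->
  (halts A B (haltz g) n <-> w = 0).
Proof.
move=> Hg; split.
  case=> y H; inversion H as [| | | | | | | |f1 v1 n1 Ha Hb]; subst.
  case/eComp1_inv: Ha => w' [Hp Hq]; inversion Hp; subst.
  exact: eval_det Hg Hq.
move=> E; subst w; exists 0; constructor => //.
by apply: eComp1; [apply: eProj' | exact: Hg].
Qed.

Arguments haltz_spec {A B g n w}.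

Definition Imp c Q := PMin (PPrim c (PComp PZero [:: PComp Q [:: PProj 2]])).
Lemma Imp_spec A B c Q n cv : eval A B c [:: n] cv ->
  (halts A B (Imp c Q) n <-> (cv = 0 \/ halts A B Q n)).
Proof.
move=> Hc.
have F1 : forall y, eval A B (PPrim c (PComp PZero [:: PComp Q [:: PProj 2]])) [:: 1; n] y ->
   halts A B Q n.
  move=> y H; inversion H as [| | | | | | |b1 s1 n1 v1 z1 y1 Ha Hb|]; subst.
  case/eComp1_inv: Hb => w [Hw _].
  case/eComp1_inv: Hw => w' [Hp Hq]; inversion Hp; subst.
  by exists w.
split.
  case=> y H; inversion H as [| | | | | | | |f1 v1 n1 Ha Hb]; subst.
  case: y H Ha Hb => [|y] H Ha Hb.
    inversion Ha as [| | | | | |b1 s1 v1 y1 Hd| |]; subst.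
    by left; exact: eval_det Hc Hd.
  right; case: y H Ha Hb => [|y] H Ha Hb; first exact: F1 Ha.
  by case: (Hb 1 erefl) => k Hk; exact: F1 Hk.
move=> Hor; case: (eqVneq cv 0) => Hnz.
  by subst cv; exists 0; constructor => //; apply: ePrim0.
case: Hor => [E|[y Hy]]; first by rewrite E in Hnz.
exists 1; constructor.
  apply: ePrimS; first by apply: ePrim0; exact: Hc.
  apply: eComp1; last by constructor.
  apply: eComp1; [by apply: eProj' | exact: Hy].
case=> // _; exists cv.-1; apply: ePrim0; rewrite prednK ?lt0n //.
Qed.

Lemma and_spec A B e1 e2 n : halts A B (PComp PZero [:: e1; e2]) n <->
  (halts A B e1 n /\ halts A B e2 n).
Proof.
split.
  by case=> y /eComp2_inv [w1 [w2 [H1 H2 _]]]; split; [exists w1|exists w2].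
case=> [[y1 H1] [y2 H2]]; exists 0; apply: eComp2; [exact: H1|exact: H2|constructor].
Qed.

Definition code (X Y : cantor) : cantor := fun n => if issq n then X (Nat.sqrt n) else Y n.

Lemma issq_sq k : issq (k * k).
Proof. by rewrite /issq Nat.sqrt_square. Qed.

Definition tot_le (X W : cantor) := exists g, forall B n, eval (b2n W) B g [:: n] (b2n X n).

Lemma tot_refl X : tot_le X X.
Proof. by exists POrA => B n; constructor. Qed.

Lemma tot_code X Y : tot_le X (code X Y).
Proof.
exists (PComp POrA [:: sqP]) => B n.
apply: eComp1; first exact: e_sq.
have -> : b2n X n = b2n (code X Y) (head 0 [:: n * n]).
  by rewrite /b2n /code /= issq_sq Nat.sqrt_square.
constructor.
Qed.

Lemma tot_turing X W : tot_le X W -> turing_le X W.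
Proof. by case=> g Hg; exists g => n; apply: Hg. Qed.

Lemma tot_hyp X W : tot_le X W -> hyp_le X W.
Proof.
case=> g Hg; split.
  have Hg' : forall f n, eval (b2n W) f (PComp subP [:: oneP; g]) [:: n] (1 - b2n X n).
    move=> f n; apply: (@eComp2 _ _ _ _ _ _ 1 (b2n X n)); [exact: e_one|exact: Hg|exact: e_sub].
  exists (haltz (PComp subP [:: oneP; g])) => n; split.
    move=> Hx f; move: (proj2 (haltz_spec (Hg' f n))); rewrite /halts; apply.
    by rewrite /b2n Hx.
  move=> H; have := H (fun _ => 0); move/(haltz_spec (Hg' _ n)).
  by rewrite /b2n; case: (X n).
exists (haltz g) => n; split.
  by move=> Hx f; move: (proj2 (haltz_spec (Hg f n))); rewrite /halts; apply; rewrite /b2n Hx.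
move=> H; have := H (fun _ => 0); move/(haltz_spec (Hg _ n)).
by rewrite /b2n; case: (X n).
Qed.

Arguments Imp_spec {A B c Q n cv}.

Lemma code_turing X Y : turing_le Y X -> turing_le (code X Y) X.
Proof.
case=> e He.
exists (PComp (PPrim e (PComp POrA [:: PComp sqrtP [:: PProj 2]])) [:: csqP; PProj 0]) => n.
apply: (@eComp2 _ _ _ _ _ _ (issq n) n); [exact: e_csq| by apply: eProj'|].
rewrite /b2n /code; case: (issq n) => /=.
  apply: ePrimS; first by apply: ePrim0; exact: He.
  apply: (@eComp1 _ _ _ _ _ (Nat.sqrt n)); last by constructor.
  apply: eComp1; [by apply: eProj' | exact: e_sqrt].
by apply: ePrim0; exact: He.
Qed.

Lemma code_pi X (S : nat -> Prop) e Q n (P1 : Prop) :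
  (forall f, halts (b2n X) f Q n <-> P1) ->
  (S n <-> forall f, halts (b2n X) f e n) ->
  ((if issq n then P1 else S n) <->
     forall f, halts (b2n X) f (PComp PZero [:: Imp csqP Q; Imp ncsqP e]) n).
Proof.
move=> HQ HS.
have E : forall f, halts (b2n X) f (PComp PZero [:: Imp csqP Q; Imp ncsqP e]) n <->
   ((issq n : nat) = 0 \/ halts (b2n X) f Q n) /\ ((~~ issq n : nat) = 0 \/ halts (b2n X) f e n).
  move=> f; rewrite and_spec (Imp_spec (e_csq _ _ _)) (Imp_spec (e_ncsq _ _ _)) //.
case: (issq n) E => /= E.
  split.
    by move=> HP f; apply/E; split; [right; apply/HQ|left].
  move=> H; have /E [[//|/HQ //] _] := H (fun _ => 0).
rewrite HS; split.
  by move=> H f; apply/E; split; [left|right; exact: H].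
by move=> H f; have /E [_ [//|//]] := H f.
Qed.

Lemma code_hyp X Y : hyp_le Y X -> hyp_le (code X Y) X.
Proof.
case=> [[e1 H1] [e0 H0]]; split.
  exists (PComp PZero [:: Imp csqP (haltz (PComp subP [:: oneP; PComp POrA [:: sqrtP]])); Imp ncsqP e1]).
  move=> n; rewrite -(@code_pi X (fun n => Y n = true) e1 _ n (X (Nat.sqrt n) = true)) //.
    by rewrite /code; case: (issq n).
  move=> f; rewrite (@haltz_spec _ _ _ _ (1 - b2n X (Nat.sqrt n))).
    by rewrite /b2n; case: (X _).
  apply: (@eComp2 _ _ _ _ _ _ 1 (b2n X (Nat.sqrt n))); [exact: e_one| |exact: e_sub].
  apply: (@eComp1 _ _ _ _ _ (Nat.sqrt n)); [exact: e_sqrt|constructor].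
exists (PComp PZero [:: Imp csqP (haltz (PComp POrA [:: sqrtP])); Imp ncsqP e0]).
move=> n; rewrite -(@code_pi X (fun n => Y n = false) e0 _ n (X (Nat.sqrt n) = false)) //.
  by rewrite /code; case: (issq n).
move=> f; rewrite (@haltz_spec _ _ _ _ (b2n X (Nat.sqrt n))).
  by rewrite /b2n; case: (X _).
apply: (@eComp1 _ _ _ _ _ (Nat.sqrt n)); [exact: e_sqrt|constructor].
Qed.

Fixpoint vars (p : nat -> bool) (pos : nat) (s : seq bool) : seq (seq bool) :=
  match s with
  | [::] => [:: [::]]
  | x :: s' => let r := vars p pos.+1 s' in
     if p pos then [seq b :: t | b <- [:: false; true], t <- r]
     else [seq x :: t | t <- r]
  end.

Lemma size_vars p s : forall pos, size (vars p pos s) = 2 ^ (count p (iota pos (size s))).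
Proof.
elim: s => [|x s IH] pos //=.
case: (p pos) => /=.
  rewrite cats0 size_cat !size_map !IH /= expnS; lia.
by rewrite size_map IH ?Nat.add_0_l.
Qed.

Lemma vars_size p s : forall pos t, t \in vars p pos s -> size t = size s.
Proof.
elim: s => [|x s IH] pos t /=; first by rewrite inE => /eqP ->.
case: (p pos) => /=.
  rewrite cats0 mem_cat => /orP [] /mapP [t' Ht' ->] /=; by rewrite (IH _ _ Ht').
by move=> /mapP [t' Ht' ->] /=; rewrite (IH _ _ Ht').
Qed.

Lemma mem_vars p s : forall pos t, size t = size s ->
  (forall i, i < size s -> ~~ p (pos + i) -> nth false t i = nth false s i) ->
  t \in vars p pos s.
Proof.
elim: s => [|x s IH] pos [|y t] //= Hs H; try by rewrite mem_seq1.
have Ht : t \in vars p pos.+1 s.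
  apply: IH; first by case: Hs.
  by move=> i Hi Hp; have := H i.+1 Hi; rewrite addnS -addSn; apply.
case Hp: (p pos) => /=.
  rewrite cats0 mem_cat; case: y {H}; apply/orP; [right|left]; apply/mapP; by exists t.
have := H 0 erefl; rewrite addn0 Hp /= => /(_ erefl) ->.
by apply/mapP; exists t.
Qed.

Lemma count_issq l : count issq (iota 0 l) <= Nat.sqrt l + 1.
Proof.
rewrite -size_filter -(size_map Nat.sqrt) -(size_iota 0 (Nat.sqrt l + 1)).
apply: uniq_leq_size.
  rewrite map_inj_in_uniq ?filter_uniq ?iota_uniq //.
  move=> a b; rewrite !mem_filter /issq => /andP [/eqP Ha _] /andP [/eqP Hb _] E.
  by rewrite -Ha -Hb E.
move=> x /mapP [a]; rewrite mem_filter mem_iota => /andP [_ /andP [_ Ha]] ->.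
rewrite mem_iota /= add0n.
have := Nat.sqrt_le_mono a l; lia.
Qed.

Lemma count_issq_bound l m : 0 < m -> m * m <= l -> count issq (iota 0 l) * m <= 2 * l.
Proof.
move=> Hm Hl; have H := count_issq l.
have [H1 H2] := Nat.sqrt_spec l (Nat.le_0_l l).
have : Nat.sqrt l * m <= l.
  case: (leqP m (Nat.sqrt l)) => Hc; first nia.
  nia.
nia.
Qed.

Section Ext.
Variable p : nat -> bool.
Variable c : nat -> option (seq bool).

Definition ext (o : option (seq bool)) : seq (option (seq bool)) :=
  match o with None => [:: None] | Some s => map Some (vars p 0 s) end.

Definition Lc M := flatten [seq ext (c i) | i <- iota 0 M].
Definition c' k := nth None (Lc k.+1) k.

Lemma size_ext o : 0 < size (ext o).
Proof. by case: o => //= s; rewrite size_map size_vars expn_gt0. Qed.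

Lemma LcS M : Lc M.+1 = Lc M ++ ext (c M).
Proof. by rewrite /Lc -addn1 iotaD map_cat flatten_cat /= cats0. Qed.

Lemma Lc_size M : M <= size (Lc M).
Proof.
elim: M => [|M IH] //; rewrite LcS size_cat.
have := size_ext (c M); lia.
Qed.

Lemma Lc_prefix M M' : M <= M' -> exists r, Lc M' = Lc M ++ r.
Proof.
move=> /subnK <-; elim: (M' - M) => [|d [r IH]]; first by exists [::]; rewrite cats0.
by rewrite addSn LcS IH -catA; eexists.
Qed.

Lemma c'_nth k M : k < size (Lc M) -> c' k = nth None (Lc M) k.
Proof.
move=> Hk; rewrite /c'.
have H1 : k < size (Lc k.+1) by have := Lc_size k.+1; lia.
have [r1 E1] := Lc_prefix _ _ (leq_maxl k.+1 M).
have [r2 E2] := Lc_prefix _ _ (leq_maxr k.+1 M).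
have : nth None (Lc (maxn k.+1 M)) k = nth None (Lc (maxn k.+1 M)) k by [].
by rewrite {1}E1 E2 !nth_cat H1 Hk.
Qed.

Lemma c'_some k t : c' k = Some t -> exists i s, c i = Some s /\ t \in vars p 0 s.
Proof.
rewrite /c' => E.
have : Some t \in Lc k.+1.
  rewrite -E mem_nth //; case: ltnP => // H; by rewrite nth_default in E.
case/flattenP => r /mapP [i _ ->]; case Ec: (c i) => [s|] //=.
  by move=> /mapP [t' Ht' [->]]; exists i, s.
Qed.

Lemma c'_cover i s t : c i = Some s -> t \in vars p 0 s -> exists k, c' k = Some t.
Proof.
move=> Ec Ht.
have Hin : Some t \in Lc i.+1 by rewrite LcS mem_cat Ec /= map_f ?orbT.
exists (index (Some t) (Lc i.+1)).
by rewrite (c'_nth _ i.+1) ?index_mem // nth_index.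
Qed.
End Ext.

Local Open Scope ring_scope.
Notation RR := Rdefinitions.R.

Lemma cweight_ge0 s o : 0 <= cweight s o.
Proof. by case: o => [x|] //=; apply: powR_ge0. Qed.

Lemma sum_cst (T : Type) (V : seq T) (x : RR) : \sum_(t <- V) x = (size V)%:R * x.
Proof.
elim: V => [|a V IH]; first by rewrite big_nil mul0r.
by rewrite big_cons IH /= -addn1 natrD mulrDl mul1r addrC.
Qed.

Lemma c'_sum p c s s' :
  (forall i, \sum_(x <- ext p (c i)) cweight s' x <= cweight s (c i)) ->
  forall N, \sum_(k < N) cweight s' (c' p c k) <= \sum_(i < N) cweight s (c i).
Proof.
move=> Hb N.
have HN := Lc_size p c N.
rewrite (eq_bigr (fun k : 'I_N => cweight s' (nth None (Lc p c N) k))); last first.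
  move=> k _; rewrite (c'_nth _ _ _ N) //; apply: leq_trans HN; exact: ltn_ord.
apply: (@le_trans _ _ (\sum_(k < size (Lc p c N)) cweight s' (nth None (Lc p c N) k))).
  rewrite (big_ord_widen _ (fun k => cweight s' (nth None (Lc p c N) k)) HN).
  rewrite [X in _ <= X](bigID (fun k : 'I_(size (Lc p c N)) => (k < N)%N)) /=.
  by rewrite lerDl sumr_ge0 // => i _; apply: cweight_ge0.
rewrite -(big_mkord xpredT (fun k => cweight s' (nth None (Lc p c N) k))).
rewrite -(big_nth None xpredT (cweight s')) /Lc big_flatten /= big_map.
rewrite -(big_mkord xpredT (fun i => cweight s (c i))) /index_iota subn0.
by apply: ler_sum => i _.
Qed.

Lemma pow_bound (k l : nat) (s s' : RR) : k%:R <= (s' - s) * l%:R ->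
  (2 ^ k)%:R * (2 : RR) `^ (- (s' * l%:R)) <= (2 : RR) `^ (- (s * l%:R)).
Proof.
move=> H.
rewrite natrX -powR_mulrn; last lra. rewrite -powRD; last by apply/implyP => _; rewrite pnatr_eq0.
apply: ler_powR; first by lra.
lra.
Qed.

Lemma ext_weight p s s' (sg : seq bool) :
  (2 ^ count p (iota 0 (size sg)))%:R * (2 : RR) `^ (- (s' * (size sg)%:R))
     <= (2 : RR) `^ (- (s * (size sg)%:R)) ->
  \sum_(x <- ext p (Some sg)) cweight s' x <= cweight s (Some sg).
Proof.
move=> H; rewrite /= big_map.
rewrite (eq_big_seq (fun _ => (2 : RR) `^ (- (s' * (size sg)%:R)))); last first.
  by move=> t Ht /=; rewrite (vars_size _ _ _ _ Ht).
by rewrite sum_cst size_vars.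
Qed.

Lemma Hnull2 (T : set cantor) : Hnull 2 T.
Proof.
move=> n eps heps.
have [m [hmn hm]] : exists m, (n <= m)%N /\ eps^-1 < 2 ^+ m.
  exists (maxn n (Num.Def.archi_bound (eps^-1))); split; first exact: leq_maxl.
  by apply: upper_nthrootP; exact: leq_maxr.
pose c := fun i : nat => if i == 0%N then Some (nseq m false) else None.
exists (c' predT c); split; [|split].
- move=> k t /c'_some [i [sg [Ec Ht]]]; rewrite (vars_size _ _ _ _ Ht).
  by move: Ec; rewrite /c; case: eqP => // _ [<-]; rewrite size_nseq.
- move=> X _.
  have Hv : mkseq X m \in vars predT 0 (nseq m false).
    by apply: mem_vars; rewrite ?size_mkseq ?size_nseq.
  have [k Hk] := c'_cover predT c 0 (nseq m false) (mkseq X m) erefl Hv.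
  exists k, (mkseq X m); split => // i; rewrite size_mkseq => Hi; by rewrite nth_mkseq.
- move=> N; apply: le_trans (c'_sum predT c 1 2 _ N) _.
    move=> i; rewrite /c; case: eqP => _.
      apply: ext_weight; rewrite size_nseq count_predT size_iota.
      by apply: pow_bound; lra.
    by rewrite /= big_cons big_nil addr0.
  case: N => [|N]; first by rewrite big_ord0 ltW.
  rewrite big_ord_recl big1 ?addr0; last by move=> i _; rewrite /c.
  rewrite /c /= size_nseq mul1r powRN powR_mulrn; last lra.
  rewrite -[eps]invrK lef_pV2 ?ltW // posrE ?invr_gt0 // exprn_gt0 //.
Qed.

Definition Mod (A : set cantor) : set cantor :=
  fun Y => exists Z, A Z /\ forall n, ~~ issq n -> Y n = Z n.

Lemma Hnull_mod (s s' : RR) A : s < s' -> Hnull s A -> Hnull s' (Mod A).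
Proof.
move=> hss HA n eps heps.
pose d := s' - s.
have hd : 0 < d by rewrite /d subr_gt0.
have [m [hm1 hm]] : exists m : nat, (0 < m)%N /\ 2 / d < m%:R.
  exists (Num.Def.archi_bound (2 / d)).+1; split => //.
  apply: (lt_le_trans (archi_boundP _)); first by rewrite divr_ge0 // ltW.
  by rewrite ler_nat.
have [n' [hn1 hn2]] : exists n', (n <= n')%N /\ (m * m <= n')%N.
  by exists (maxn n (m * m)); rewrite leq_maxl leq_maxr.
have h2 : 2 < d * m%:R by rewrite mulrC -ltr_pdivrMr.
have [c [Hl [Hc Hs]]] := HA n' eps heps.
exists (c' issq c); split; [|split].
- move=> k t /c'_some [i [sg [Ec Ht]]]; rewrite (vars_size _ _ _ _ Ht).
  by apply: leq_trans hn1 (Hl _ _ Ec).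
- move=> Y [Z [HZ Hag]].
  have [i [sg [Ec HcZ]]] := Hc Z HZ.
  have Hv : mkseq Y (size sg) \in vars issq 0 sg.
    apply: mem_vars; first by rewrite size_mkseq.
    by move=> j Hj H; rewrite nth_mkseq // Hag // -HcZ.
  have [k Hk] := c'_cover issq c i sg (mkseq Y (size sg)) Ec Hv.
  exists k, (mkseq Y (size sg)); split => // j; rewrite size_mkseq => Hj; by rewrite nth_mkseq.
- move=> N; apply: le_trans (c'_sum issq c s s' _ N) (Hs N).
  move=> i; case Ec: (c i) => [sg|]; last by rewrite /= big_cons big_nil addr0.
  apply: ext_weight; apply: pow_bound.
  have Hl' : (m * m <= size sg)%N by apply: leq_trans hn2 (Hl _ _ Ec).
  have := count_issq_bound (size sg) m hm1 Hl'.
  rewrite -(ler_nat RR) natrM natrM => H.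
  rewrite -/d.
  have hm0 : 0 < (m%:R : RR) by rewrite ltr0n.
  have hl0 : 0 <= ((size sg)%:R : RR) by [].
  set k := ((count issq (iota 0 (size sg)))%:R : RR) in H *.
  set l := ((size sg)%:R : RR) in H hl0 *.
  set mm := (m%:R : RR) in H hm0 h2 *.
  rewrite -(ler_pM2r hm0).
  apply: (le_trans H).
  rewrite -mulrA [l * mm]mulrC mulrA.
  by apply: ler_wpM2r => //; apply: ltW.
Qed.

Local Open Scope ring_scope.
Local Open Scope classical_set_scope.

Definition HS (T : set cantor) := [set s : RR | 0 <= s /\ Hnull s T].

Lemma HS_ne T : HS T !=set0.
Proof. by exists 2; split; [lra | apply: Hnull2]. Qed.

Lemma HS_lb T : has_lbound (HS T).
Proof. by exists 0 => x []. Qed.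

Lemma dimH_mono (S T : set cantor) : S `<=` T -> dimH S <= dimH T.
Proof.
move=> HST; apply: lb_le_inf (HS_ne T) _ => x [hx Hx].
apply: (ge_inf (HS_lb S)); split => // k eps he.
have [c [H1 [H2 H3]]] := Hx k eps he.
by exists c; split; [|split] => // X /HST; apply: H2.
Qed.

Lemma dimH_mod A : dimH (Mod A) <= dimH A.
Proof.
apply/ler_addgt0Pr => e he.
have [s [hs0 Hs] hlt] := inf_adherent he (conj (HS_ne A) (HS_lb A)).
apply: (ge_inf (HS_lb _)); split.
  by apply: le_trans hs0 (ltW hlt).
exact: Hnull_mod hlt Hs.
Qed.

Lemma main_gen (rel : cantor -> cantor -> Prop) (A : set cantor) :
  (forall X, rel X X) ->
  (forall X Y, rel Y X -> rel (code X Y) X /\ rel X (code X Y)) ->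
  closed_under (fun X Y => rel X Y /\ rel Y X) A ->
  dimH A = dimH (down_closure rel A) /\ dimH A <= dimH (up_closure rel A).
Proof.
move=> Hrefl Hcode Hcl; split; last first.
  by apply: dimH_mono => X HX; exists X.
apply/eqP; rewrite eq_le; apply/andP; split.
  by apply: dimH_mono => X HX; exists X.
apply: le_trans (dimH_mod A); apply: dimH_mono => Y [X [HX hle]].
exists (code X Y); split.
  by apply: Hcl HX _; apply: Hcode.
by move=> n /negbTE Hn; rewrite /code Hn.
Qed.

Local Close Scope classical_set_scope.

Theorem mainTheorem1 :
  (forall A : set cantor, closed_under turing_eq A ->
     dimH A = dimH (down_closure turing_le A) /\
     dimH A <= dimH (up_closure turing_le A)) /\
  (forall A : set cantor, closed_under hyp_eq A ->
     dimH A = dimH (down_closure hyp_le A) /\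
     dimH A <= dimH (up_closure hyp_le A)).
Proof.
split => A HA.
  apply: main_gen HA.
    by move=> X; apply: tot_turing; apply: tot_refl.
  move=> X Y H; split; first exact: code_turing.
  by apply: tot_turing; apply: tot_code.
apply: main_gen HA.
  by move=> X; apply: tot_hyp; apply: tot_refl.
move=> X Y H; split; first exact: code_hyp.
by apply: tot_hyp; apply: tot_code.
Qed.
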